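(* Let $P$ be a finite poset with height function $h$ and a unique minimum $\hat{0}$. Then $$\mathsf{Z}_{P,h}([0]_q)=q^{-h(\hat{0})}\big(1-\chi_{P\setminus\{\hat{0}\}}\big),$$ where $\chi_R=\sum_{k\ge1}(-1)^{k-1}\#\operatorname{Ch}_k(R)$ (so $\chi_\emptyset=0$). In particular, if $P$ also has a unique maximum $\hat{1}\neq\hat{0}$, then $\mathsf{Z}_{P,h}([0]_q)=0$.
   Context: $q$ is an indeterminate; $[n]_q=(q^n-1)/(q-1)$ (so $[0]_q=0$). A height function is $h:P\to\mathbb{N}$ with $h(x)<h(y)$ whenever $y$ covers $x$. $\operatorname{Ch}_k(R)$ is the set of strict chains $c_1<\cdots<c_k$ in $R$. For a tuple $a$ of $k$ distinct nonnegative integers, $\mathsf{E}_a\in\mathbb{Q}(q)[x]$ is the unique polynomial with $\mathsf{E}_a([n]_q)=\sum_{m\in\mathbb{N}^k,\sum m_i=n}q^{\sum a_im_i}$ for $n\ge0$. The $q$-Zeta polynomial is $\mathsf{Z}_{P,h}(x)=\sum_{k\ge1}\sum_{c\in\operatorname{Ch}_k(P)}q^{\sum_i h(c_i)}\mathsf{E}_{(h(c_1),\dots,h(c_k))}((x-[k+1]_q)/q^{k+1})$; it is the unique polynomial with $\mathsf{Z}_{P,h}([n]_q)=\sum_{e_1\le\cdots\le e_{n-1}}q^{\sum_j h(e_j)}$ for all $n\ge2$. *)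

(* Defs.v *)
From HB Require Import structures.
From mathcomp Require Import all_boot all_order all_algebra.
From Stdlib Require Import ClassicalEpsilon.
Set Implicit Arguments. Unset Strict Implicit. Unset Printing Implicit Defensive.
Import Order.TTheory GRing.Theory Num.Theory.
Local Open Scope ring_scope.

Definition Qq : fieldType := {fraction {poly rat}}.
Definition qv : Qq := FracField.tofrac ('X : {poly rat}).

Definition qint (n : nat) : Qq := (qv ^+ n - 1) / (qv - 1).

(* For a : seq nat (a tuple of length k = size a), the value
   sum_{m in N^k, sum m_i = n} q^{sum a_i m_i}.  Components m_i are <= n,
   so m ranges over (size a)-tuples in 'I_n.+1. *)
Definition Esum (a : seq nat) (n : nat) : Qq :=
  \sum_(m : (size a).-tuple 'I_n.+1 | \sum_(i < size a) (tnth m i : nat) == n)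
     qv ^+ (\sum_(i < size a) nth 0%N a i * tnth m i).

Definition E_spec (a : seq nat) (p : {poly Qq}) : Prop :=
  forall n : nat, p.[qint n] = Esum a n.

(* E_a : the (unique) polynomial with E_a([n]_q) = Esum a n for all n >= 0
   (chosen by classical choice; it exists and is unique when a has distinct entries). *)
Definition E (a : seq nat) : {poly Qq} :=
  epsilon (inhabits 0) (E_spec a).

Definition Ch (d : Order.disp_t) (P : finPOrderType d) (A : {pred P}) (k : nat)
  : {set k.-tuple P} :=
  [set t : k.-tuple P | sorted (fun x y => (x < y)%O) t && all (mem A) t].

Definition covers (d : Order.disp_t) (P : finPOrderType d) (x y : P) : bool :=
  (x < y)%O && [forall w : P, ~~ ((x < w)%O && (w < y)%O)].

Definition height_fun (d : Order.disp_t) (P : finPOrderType d) (h : P -> nat) : Prop :=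
  forall x y : P, covers x y -> (h x < h y)%N.

(* chi_R = sum_{k>=1} (-1)^{k-1} #Ch_k(R); chains have length <= #|P|. *)
Definition chi (d : Order.disp_t) (P : finPOrderType d) (A : {pred P}) : Qq :=
  \sum_(1 <= k < #|P|.+1) (-1) ^+ k.-1 * (#|Ch A k|)%:R.

Definition Zpoly (d : Order.disp_t) (P : finPOrderType d) (h : P -> nat) : {poly Qq} :=
  \sum_(1 <= k < #|P|.+1) \sum_(c in Ch (@predT P) k)
     (qv ^+ (\sum_(x <- c) h x)) *:
       (E (map h c) \Po (('X - (qint k.+1)%:P) * (qv ^- k.+1)%:P)).

(* Main.v *)
Require Import Defs.
From HB Require Import structures.
From mathcomp Require Import all_boot all_order all_algebra ring.
From Stdlib Require Import ClassicalEpsilon.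
Set Implicit Arguments. Unset Strict Implicit. Unset Printing Implicit Defensive.
Import Order.TTheory GRing.Theory Num.Theory.
Local Open Scope ring_scope.

Lemma qvX_eq i j : (qv ^+ i == qv ^+ j) = (i == j)%N.
Proof.
rewrite /qv -!rmorphXn /= tofrac_eq; apply/eqP/eqP => [H|->//].
by have := congr1 (fun p : {poly rat} => size p) H; rewrite /= !size_polyXn => -[].
Qed.

Lemma qv_neq0 : qv != 0.
Proof. by rewrite /qv tofrac_eq0 polyX_eq0. Qed.

Lemma qvX_neq0 i : qv ^+ i != 0.
Proof. by rewrite expf_neq0 // qv_neq0. Qed.

Lemma qv1_neq0 : qv - 1 != 0.
Proof. by rewrite subr_eq0 -{1}(expr1 qv) -(expr0 qv) qvX_eq. Qed.

Lemma qint_inj : injective qint.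
Proof.
move=> i j; rewrite /qint => H; apply/eqP; rewrite -qvX_eq; apply/eqP.
have := congr1 (fun x => x * (qv - 1) + 1) H.
by rewrite !mulfVK ?qv1_neq0 // !subrK.
Qed.

Lemma qintE n : 1 + (qv - 1) * qint n = qv ^+ n.
Proof. by rewrite /qint mulrC mulfVK ?qv1_neq0 // addrC subrK. Qed.

Lemma alg1 (F : fieldType) (c Q A u U : F) : Q - A != 0 ->
  c * Q / (Q - A) * (Q * U) = A * (c * Q / (Q - A) * U) + c * (Q * U).
Proof. move=> ne; field; exact: ne. Qed.
Lemma alg2 (F : fieldType) (c A B S T : F) :
  c * (A * B) + (A * S + T) = A * (c * B + S) + T.
Proof. ring. Qed.

Fixpoint Lc (a : seq nat) : seq (nat * Qq) :=
  match a with
  | [::] => [::]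
  | a0 :: a' =>
    let L' := [seq (p.1, p.2 * qv ^+ p.1 / (qv ^+ p.1 - qv ^+ a0)) | p <- Lc a'] in
    (a0, 1 - \sum_(p <- L') p.2) :: L'
  end.

Definition ev (L : seq (nat * Qq)) (u : Qq) : Qq := \sum_(p <- L) p.2 * u ^+ p.1.

Lemma Lc_fst a : map fst (Lc a) = a.
Proof.
elim: a => [|a0 a IH] //=; congr (_ :: _).
by rewrite -map_comp -[RHS]IH; apply: eq_map.
Qed.

Lemma Lc_mem a p : p \in Lc a -> p.1 \in a.
Proof. by move=> pin; rewrite -(Lc_fst a); apply: map_f. Qed.

Lemma ev_nil u : ev (Lc [::]) u = 0.
Proof. by rewrite /ev big_nil. Qed.

Lemma ev_rec a0 a u : a0 \notin a ->
  ev (Lc (a0 :: a)) (qv * u) = qv ^+ a0 * ev (Lc (a0 :: a)) u + ev (Lc a) (qv * u).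
Proof.
move=> a0a; rewrite /ev /= !big_cons !big_map /=.
set c := 1 - _.
have E : \sum_(p <- Lc a) p.2 * qv ^+ p.1 / (qv ^+ p.1 - qv ^+ a0) * (qv * u) ^+ p.1
  = qv ^+ a0 * \sum_(p <- Lc a) p.2 * qv ^+ p.1 / (qv ^+ p.1 - qv ^+ a0) * u ^+ p.1
    + \sum_(p <- Lc a) p.2 * (qv * u) ^+ p.1.
  rewrite big_distrr -big_split /=; apply: eq_big_seq => p pin.
  have ne : qv ^+ p.1 - qv ^+ a0 != 0.
    rewrite subr_eq0 qvX_eq; apply/eqP => e; move: a0a; rewrite -e.
    by rewrite (Lc_mem pin).
  by rewrite exprMn alg1.
by rewrite E exprMn alg2.
Qed.

Lemma Lc_cons a0 a : Lc (a0 :: a) =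
    (a0, 1 - \sum_(p <- [seq (p.1, p.2 * qv ^+ p.1 / (qv ^+ p.1 - qv ^+ a0)) | p <- Lc a]) p.2)
    :: [seq (p.1, p.2 * qv ^+ p.1 / (qv ^+ p.1 - qv ^+ a0)) | p <- Lc a].
Proof. by []. Qed.

Lemma ev_one a : a != [::] -> ev (Lc a) 1 = 1.
Proof.
case: a => [//|a0 a] _; rewrite /ev Lc_cons big_cons.
rewrite expr1n mulr1.
under eq_bigr do rewrite expr1n mulr1.
by rewrite subrK.
Qed.

Fixpoint Es (a : seq nat) (n : nat) : Qq :=
  match a with
  | [::] => (n == 0)%:R
  | a0 :: a' => \sum_(j < n.+1) qv ^+ (a0 * j) * Es a' (n - j)
  end.

Lemma Es0 a : Es a 0 = 1.
Proof. by elim: a => [|a0 a IH] //=; rewrite big_ord1 /= muln0 expr0 mul1r subn0 IH. Qed.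

Lemma Es_rec a0 a n : Es (a0 :: a) n.+1 = qv ^+ a0 * Es (a0 :: a) n + Es a n.+1.
Proof.
rewrite /= big_ord_recl /= muln0 expr0 mul1r subn0 addrC big_distrr /=; congr (_ + _).
apply: eq_bigr => i _; rewrite /bump leq0n add1n subSS mulnS exprD mulrA //.
Qed.

Lemma Es_ev a n : uniq a -> a != [::] -> Es a n = ev (Lc a) (qv ^+ n).
Proof.
elim: a n => [//|a0 a IH] n.
move=> /andP[a0a ua] _.
elim: n => [|n IHn]; first by rewrite Es0 expr0 ev_one.
rewrite Es_rec IHn exprS ev_rec //; congr (_ + _).
case: a IH IHn a0a ua => [|a1 a] IH _ _ ua.
  by rewrite ev_nil.
by rewrite IH // exprS.
Qed.

Definition G (B : nat) (a : seq nat) : {poly Qq} :=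
  \prod_(i < size a) \poly_(j < B) qv ^+ (nth 0%N a i * j).

Lemma G_coef a B n : (n < B)%N -> (G B a)`_n = Es a n.
Proof.
elim: a n => [|a0 a IH] n nB; first by rewrite /G big_ord0 coef1.
rewrite /G big_ord_recl coefM /=; apply: eq_bigr => j _.
rewrite coef_poly (leq_ltn_trans _ nB) ?(leq_ord j) // -IH ?(leq_ltn_trans (leq_subr _ _) nB) //.


Qed.

Lemma prod_scaleX (k : nat) (c : 'I_k -> Qq) (g : 'I_k -> nat) :
  \prod_(i < k) (c i *: 'X^(g i)) = (\prod_(i < k) c i) *: 'X^(\sum_(i < k) g i).
Proof.
rewrite -mul_polyC rmorph_prod -prodrXr -big_split /=.
by apply: eq_bigr => i _; rewrite mul_polyC.
Qed.

Lemma G_tuple a B n : (G B a)`_n =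
  \sum_(m : (size a).-tuple 'I_B | \sum_(i < size a) (tnth m i : nat) == n)
     qv ^+ (\sum_(i < size a) nth 0%N a i * tnth m i).
Proof.
rewrite /G.
under eq_bigr => i _ do rewrite poly_def.
rewrite bigA_distr_bigA /= coef_sum.
under [X in X = _]eq_bigr => f _ do rewrite (prod_scaleX (fun i => qv ^+ (nth 0%N a i * f i)) (fun i => nat_of_ord (f i))) coefZ coefXn.
rewrite [RHS]big_mkcond (reindex (fun m : (size a).-tuple 'I_B => [ffun i => tnth m i])) /=.
  apply: eq_bigr => m _; rewrite prodrXr eq_sym.
  set f := [ffun _ => _]; have E1 : f =1 tnth m by move=> i; rewrite ffunE.
  under eq_bigr do rewrite E1.
  have -> : (\sum_(i < size a) f i)%N = (\sum_(i < size a) tnth m i)%N by apply: eq_bigr => i _; rewrite E1.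
  change (\sum_(i < size a) tnth m i)%N with (\sum_(i < size a) (tnth m i : nat)).
  by case: eqP => _; rewrite ?mulr1 ?mulr0.
exists (fun f : {ffun 'I_(size a) -> 'I_B} => [tuple f i | i < size a]) => [m _|f _].
  by apply: eq_from_tnth => i; rewrite tnth_mktuple ffunE.
by apply/ffunP => i; rewrite ffunE tnth_mktuple.
Qed.

Lemma Esum_Es a n : Esum a n = Es a n.
Proof. by rewrite /Esum -G_tuple G_coef. Qed.

Definition Pp (a : seq nat) : {poly Qq} :=
  \sum_(p <- Lc a) p.2 *: ((1 + (qv - 1) *: 'X) ^+ p.1).

Lemma Pp_eval a x : (Pp a).[x] = ev (Lc a) (1 + (qv - 1) * x).
Proof.
rewrite /Pp horner_sum /ev; apply: eq_bigr => p _.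
rewrite !hornerE. reflexivity.
Qed.

Lemma poly_uniq (p r : {poly Qq}) : (forall n, p.[qint n] = r.[qint n]) -> p = r.
Proof.
move=> H; apply/eqP; rewrite -subr_eq0; have [//|ne] := eqVneq (p - r) 0.
exfalso.
have Hr : all (root (p - r)) [seq qint i | i <- iota 0 (size (p - r))].
  by apply/allP => x /mapP[i _ ->]; rewrite /root hornerD hornerN H subrr.
have := max_poly_roots ne Hr.
rewrite size_map size_iota ltnn map_inj_uniq ?iota_uniq //; first by move=> /(_ isT). exact: qint_inj.
Qed.

Lemma E_eq a : uniq a -> a != [::] -> E a = Pp a.
Proof.
move=> ua an.
have sp : E_spec a (Pp a).
  by move=> n; rewrite Pp_eval qintE Esum_Es Es_ev.
have sE : E_spec a (E a) by rewrite /E; apply: epsilon_spec; exists (Pp a).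
by apply: poly_uniq => n; rewrite sE sp.
Qed.

Lemma alg3 (F : fieldType) (A X B : F) : A != 0 -> (A * X + B - B) / A = X.
Proof. by move=> ne; field. Qed.
Lemma alg4 (F : fieldType) (A Q s : F) : A != 0 -> Q != 0 ->
  (0 - s / Q) / A = - s / (A * Q).
Proof. by move=> ne nq; field; apply/andP. Qed.
Lemma alg5 (F : fieldType) (A Q s T : F) : A != 0 -> Q != 0 ->
  (- s / (A * Q) - s / Q * T) / A = - s / (A * Q) * (A^-1 + T).
Proof. by move=> ne nq; field; apply/andP. Qed.

Definition fv a m := ev (Lc a) (qv^-1 ^+ m).

Lemma fv_back a0 a m : a0 \notin a ->
  fv (a0 :: a) m.+1 = (fv (a0 :: a) m - fv a m) / qv ^+ a0.
Proof.
move=> a0a; rewrite /fv.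
have := @ev_rec a0 a (qv^-1 ^+ m.+1) a0a.
rewrite exprS mulrA mulfV ?qv_neq0 // mul1r => ->.
by rewrite alg3 // qvX_neq0.
Qed.

Lemma fv_zero a : uniq a -> forall m, (0 < m < size a)%N -> fv a m = 0.
Proof.
elim: a => [_ m /andP[_ //]|a0 a IH /andP[a0a ua] m].
elim: m => [//|m IHm] /andP[_ hm].
rewrite fv_back //.
case: m IHm hm => [|m] IHm hm.
  rewrite /fv !expr0 ev_one // ev_one ?subrr ?mul0r //.
  by case: a {IH IHm a0a ua} hm.
rewrite IHm ?IH ?subrr ?mul0r //= ltnW //.
Qed.

Lemma fv_top a : uniq a -> a != [::] ->
  fv a (size a) = (-1) ^+ (size a).-1 / qv ^+ (\sum_(j <- a) j).
Proof.
elim: a => [//|a0 a IH /andP[a0a ua] _].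
rewrite [size _]/= fv_back // big_cons.
case: a IH a0a ua => [|a1 a] IH a0a ua.
  rewrite /fv expr0 ev_one // ev_nil subr0 big_nil addn0 expr0 mul1r; reflexivity.
rewrite (@fv_zero (a0 :: a1 :: a)) ?ltnSn //; last by rewrite /= a0a.
rewrite IH // exprD alg4 ?qvX_neq0 //.
rewrite -[(size (a1 :: a)).+1.-1]/(size (a1 :: a)) -[size (a1 :: a)]/(size a).+1 /= exprS mulN1r; reflexivity.
Qed.

Lemma fv_top1 a : uniq a -> a != [::] ->
  fv a (size a).+1 = (-1) ^+ (size a).-1 / qv ^+ (\sum_(j <- a) j) * \sum_(j <- a) qv^-1 ^+ j.
Proof.
move=> ua an; move: ua an (fv_top ua an).
elim: a => [//|a0 a IH /andP[a0a ua] _ ftop].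
rewrite fv_back // ftop.
case: a IH a0a ua ftop => [|a1 a] IH a0a ua ftop.
  rewrite /fv expr1 ev_nil subr0 !big_cons !big_nil addn0 addr0 expr0 !mul1r exprVn.
  reflexivity.
rewrite IH //; last exact: fv_top.
rewrite !big_cons exprD exprVn.
rewrite -[(size (a0 :: a1 :: a)).-1]/(size (a1 :: a)) -[size (a1 :: a)]/(size a).+1 /=.
rewrite exprS mulN1r.
by rewrite [qv^-1 ^+ a0]exprVn alg5 ?qvX_neq0.
Qed.

Lemma qint0 : qint 0 = 0.
Proof. by rewrite /qint expr0 subrr mul0r. Qed.

Lemma alg6 (F : fieldType) (Q s T : F) : Q != 0 -> Q * (s / Q * T) = s * T.
Proof. by move=> ne; field. Qed.
Lemma alg7 (F : fieldType) (Q : F) : Q != 0 -> 1 + - (Q - 1) * Q^-1 = Q^-1.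
Proof. by move=> ne; field. Qed.

Lemma yk k : 1 + (qv - 1) * ((qint 0 - qint k) * qv ^- k) = qv^-1 ^+ k.
Proof.
have e : (qv - 1) * qint k = qv ^+ k - 1 by rewrite -(qintE k) addrAC subrr add0r.
by rewrite qint0 sub0r mulrA mulrN e exprVn alg7 // qvX_neq0.
Qed.

Lemma term_eval (a : seq nat) : uniq a -> a != [::] ->
  (qv ^+ (\sum_(j <- a) j) *: (E a \Po (('X - (qint (size a).+1)%:P) * (qv ^- (size a).+1)%:P))).[qint 0]
  = (-1) ^+ (size a).-1 * \sum_(j <- a) qv^-1 ^+ j.
Proof.
move=> ua an.
rewrite hornerZ horner_comp E_eq // Pp_eval hornerM hornerD hornerN hornerX !hornerC yk.
by rewrite -/(fv a (size a).+1) fv_top1 // alg6 // qvX_neq0.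
Qed.

Section Po.
Variables (d : Order.disp_t) (P : finPOrderType d).

Lemma Ch_mem (A : {pred P}) k (t : k.-tuple P) :
  (t \in Ch A k) = sorted (fun x y => (x < y)%O) t && all (mem A) t.
Proof. by rewrite inE. Qed.

Lemma Ch_big (A : {pred P}) k (t : k.-tuple P) : (#|A| < k)%N -> (t \in Ch A k) = false.
Proof.
move=> lt; apply/negbTE/negP; rewrite Ch_mem => /andP[s al].
have u : uniq t by apply: (lt_sorted_uniq s).
have sub : {subset t <= enum A} by move=> x xt; rewrite mem_enum; exact: (allP al).
by have := uniq_leq_size u sub; rewrite size_tuple -cardE leqNgt lt.
Qed.

Lemma Ch0 (A : {pred P}) : #|Ch A 0| = 1%N.
Proof.
have -> : Ch A 0 = [set: 0.-tuple P].
  by apply/setP => t; rewrite inE [t]tuple0 inE.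
by rewrite cardsT card_tuple expn0.
Qed.

Lemma Ch_split (B B' : {pred P}) (m : P) : m \in B -> (forall x, x \in B -> (m <= x)%O) ->
  (forall x, (x \in B') = (x \in B) && (x != m)) -> forall k (F : k.+1.-tuple P -> Qq),
  \sum_(t in Ch B k.+1) F t = \sum_(t in Ch B' k.+1) F t + \sum_(t in Ch B' k) F (cons_tuple m t).
Proof.
move=> mB mmin B'E k F.
rewrite (bigID (fun t => m \in t)) /= addrC; congr (_ + _).
  apply: eq_bigl => t; rewrite !Ch_mem -andbA; congr (_ && _).
  apply/idP/idP.
    move=> /andP[al nm]; apply/allP => x xt; change (x \in B').
    have xB : x \in B := allP al x xt.
    by rewrite B'E xB /=; apply: contraNneq nm => <-.
  move=> al; have alB : forall x, x \in t -> x \in B'  := allP al.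
  apply/andP; split; first by apply/allP => x /alB; rewrite B'E => /andP[].
  by apply/negP => /alB; rewrite B'E eqxx andbF.
rewrite (reindex_onto (fun t : k.-tuple P => cons_tuple m t) (fun t : k.+1.-tuple P => behead_tuple t)) /=.
  apply: eq_bigl => j.
  have -> : behead_tuple (cons_tuple m j) == j by apply/eqP/val_inj.
  rewrite !Ch_mem /= in_cons eqxx /= !andbT (lt_path_sortedE m j) mB /=.
  rewrite -andbA andbCA; congr (_ && _).
  apply/idP/idP.
    move=> /andP[a2 a1]; apply/allP => x xj; change (x \in B').
    have xB : x \in B := allP a1 x xj.
    have mx : (m < x)%O := allP a2 x xj.
    by move: mx; rewrite B'E xB lt_neqAle eq_sym => /andP[].
  move=> al; have alB : forall x, x \in j -> x \in B'  := allP al.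
  apply/andP; split; apply/allP => x /alB; rewrite B'E => /andP[xB xm] //.
  by change (m < x)%O; rewrite lt_neqAle eq_sym xm mmin.
move=> t /andP[]; case: t => [[|x s] //= sz]; rewrite Ch_mem /= => /andP[ps /andP[xB _]].
rewrite in_cons => /orP[/eqP ->|ms]; first by apply: val_inj.
exfalso; move: ps; rewrite lt_path_sortedE => /andP[/allP/(_ m ms) xm _].
have xm' : (x < m)%O := xm.
by move: (mmin x xB); rewrite le_eqVlt (lt_gtF xm') orbF => /eqP mx; move: xm'; rewrite mx ltxx.
Qed.

End Po.

Lemma alt_tele (R : comNzRingType) (f : nat -> R) n :
  \sum_(0 <= i < n) (-1) ^+ i * (f i.+1 + f i) = f 0%N - (-1) ^+ n * f n.
Proof.
rewrite (@telescope_sumr_eq _ 0 n (fun i => - ((-1) ^+ i * f i))) //.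
  rewrite expr0 mul1r opprK addrC; reflexivity.
by move=> k _; rewrite exprS mulN1r mulNr !opprK mulrDr addrC.
Qed.

Section Po2.
Variables (d : Order.disp_t) (P : finPOrderType d).

Lemma Ch_card_big (A : {pred P}) k : (#|A| < k)%N -> #|Ch A k| = 0%N.
Proof.
move=> lt; have -> : Ch A k = set0 by apply/setP => t; rewrite in_set0 Ch_big.
exact: cards0.
Qed.

Lemma card_lt (A : {pred P}) m : m \notin A -> (#|A| < #|P|)%N.
Proof.
move=> mA; rewrite -(cardC A) -{1}[#|A|]addn0 ltn_add2l; apply/card_gt0P.
by exists m; rewrite inE.
Qed.

Lemma card_split (B B' : {pred P}) (m : P) : m \in B -> (forall x, x \in B -> (m <= x)%O) ->
  (forall x, (x \in B') = (x \in B) && (x != m)) -> forall k,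
  (#|Ch B k.+1|%:R : Qq) = #|Ch B' k.+1|%:R + #|Ch B' k|%:R.
Proof.
move=> mB mmin B'E k.
have := @Ch_split _ _ B B' m mB mmin B'E k (fun _ => 1).
by rewrite !sumr_const.
Qed.

Lemma chi_min (B B' : {pred P}) (m : P) : m \in B -> (forall x, x \in B -> (m <= x)%O) ->
  (forall x, (x \in B') = (x \in B) && (x != m)) -> chi B = 1.
Proof.
move=> mB mmin B'E.
rewrite /chi big_add1 succnK.
under eq_bigr => i _ do rewrite /= (card_split mB mmin B'E).
rewrite alt_tele Ch0 Ch_card_big ?mulr0 ?subr0 //.
by apply: (card_lt (m := m)); rewrite B'E eqxx andbF.
Qed.

Lemma Ch_dual (A : {pred P}) k : #|Ch (P := P^d) A k| = #|Ch A k|.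
Proof.
pose f := @rev_tuple k P.
have fK : involutive f by move=> t; apply: val_inj; rewrite /= revK.
rewrite -(card_imset _ (inv_inj fK)) (can2_imset_pre _ fK fK).
apply: eq_card => t; rewrite !inE /= rev_sorted all_rev.
reflexivity.
Qed.

End Po2.

Section Main.
Variables (d : Order.disp_t) (P : finPOrderType d) (h : P -> nat).
Hypothesis hh : height_fun h.

Lemma h_lt (x y : P) : (x < y)%O -> (h x < h y)%N.
Proof.
suff: forall n (x y : P), (#|[pred w | (x < w)%O && (w < y)%O]| < n)%N -> (x < y)%O -> (h x < h y)%N.
  by apply.
elim=> [//|n IH] {}x {}y cn xy.
case: (boolP (covers x y)) => [/hh //|].
rewrite /covers xy /= negb_forall => /existsP[w]; rewrite negbK => /andP[xw wy].
have c1 : (#|[pred v | (x < v)%O && (v < w)%O]| < n)%N.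
  rewrite -ltnS; apply: (leq_trans _ cn); rewrite ltnS; apply: proper_card; apply/properP; split.
    by apply/subsetP => v; rewrite !inE => /andP[-> vw] /=; exact: lt_trans vw wy.
  by exists w; rewrite !inE ?xw ?wy ?ltxx ?andbF.
have c2 : (#|[pred v | (w < v)%O && (v < y)%O]| < n)%N.
  rewrite -ltnS; apply: (leq_trans _ cn); rewrite ltnS; apply: proper_card; apply/properP; split.
    by apply/subsetP => v; rewrite !inE => /andP[wv ->]; rewrite (lt_trans xw wv).
  by exists w; rewrite !inE ?xw ?wy ?ltxx.
exact: ltn_trans (IH _ _ c1 xw) (IH _ _ c2 wy).
Qed.

Lemma chain_uniq k (c : k.-tuple P) : c \in Ch predT k -> uniq (map h c).
Proof.
rewrite Ch_mem => /andP[s _].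
apply: (sorted_uniq ltn_trans ltnn); rewrite sorted_map.
by apply: sub_sorted s => x y /h_lt.
Qed.

End Main.

Lemma term_eval' (a : seq nat) k : uniq a -> a != [::] -> size a = k ->
  (qv ^+ (\sum_(j <- a) j) *: (E a \Po (('X - (qint k.+1)%:P) * (qv ^- k.+1)%:P))).[qint 0]
  = (-1) ^+ k.-1 * \sum_(j <- a) qv^-1 ^+ j.
Proof. by move=> ua an <-; apply: term_eval. Qed.

Section Main2.
Variables (d : Order.disp_t) (P : finPOrderType d) (h : P -> nat).
Hypothesis hh : height_fun h.

Lemma Z_chains : (Zpoly h).[qint 0] =
  \sum_(0 <= i < #|P|) \sum_(c in Ch predT i.+1) (-1) ^+ i * \sum_(x <- c) qv^-1 ^+ h x.
Proof.
rewrite /Zpoly horner_sum big_add1 succnK; apply: eq_bigr => i _.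
rewrite horner_sum; apply: eq_bigr => c cin.
have e1 : (\sum_(x <- c) h x)%N = \sum_(j <- map h c) j by rewrite big_map.
rewrite e1 (term_eval' (k := i.+1)) ?(chain_uniq hh cin) ?size_map ?size_tuple //.
  by rewrite big_map.
by rewrite -size_eq0 size_map size_tuple.
Qed.

End Main2.

Lemma alg8 (R : comNzRingType) (a x y z : R) n :
  a * x + (a * y *+ n + a * z) = a * (x + z) + y * (a * n%:R).
Proof. rewrite -mulr_natr; ring. Qed.

Lemma fin_alg (a b c e wz X : Qq) : a = 0 -> b = 0 -> X = 1 - c -> a - e * b + wz * X = wz * (1 - c).
Proof. by move=> -> -> ->; rewrite mulr0 subrr add0r. Qed.

Lemma sum_cons_tuple (d : Order.disp_t) (P : finPOrderType d) k (z : P) (c : k.-tuple P) (f : P -> Qq) :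
  \sum_(x <- cons_tuple z c) f x = f z + \sum_(x <- c) f x.
Proof. exact: big_cons. Qed.

Theorem mainTheorem13 (d : Order.disp_t) (P : finPOrderType d) (h : P -> nat)
  (hh : height_fun h) (z : P) (hz : forall x : P, (z <= x)%O) :
  (Zpoly h).[qint 0] = qv ^- (h z) * (1 - chi (fun x : P => x != z))
  /\ (forall o : P, (forall x : P, (x <= o)%O) -> o != z -> (Zpoly h).[qint 0] = 0).
Proof.
pose A : {pred P} := (fun x : P => x != z).
have Asplit : forall x, (x \in A) = (x \in (@predT P)) && (x != z) by [].
have zT : z \in (@predT P) by [].
have zmin : forall x, x \in (@predT P) -> (z <= x)%O by move=> x _; exact: hz.
have zA : z \notin A by rewrite /A unfold_in /= eqxx.
pose w := qv^-1.
pose s := fun i => \sum_(c in Ch A i) \sum_(x <- c) w ^+ h x.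
pose N := fun i => (#|Ch A i|%:R : Qq).
have inner : forall i, \sum_(c in Ch predT i.+1) (-1) ^+ i * \sum_(x <- c) w ^+ h x
    = (-1) ^+ i * (s i.+1 + s i) + w ^+ (h z) * ((-1) ^+ i * N i).
  move=> i; rewrite (Ch_split zT zmin Asplit).
  under [X in _ + X = _]eq_bigr => c _ do rewrite sum_cons_tuple mulrDr.
  rewrite big_split /= sumr_const -!big_distrr; exact: alg8.
have part1 : (Zpoly h).[qint 0] = qv ^- (h z) * (1 - chi A).
  rewrite (Z_chains hh) (eq_bigr _ (fun i _ => inner i)) big_split /= -big_distrr /= alt_tele.
  have s0 : s 0%N = 0.
    by apply: big1 => c _; rewrite [c]tuple0 big_nil.
  have sn : s #|P| = 0.
    by apply: big_pred0 => c; rewrite Ch_big // (card_lt zA).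
  have sumN : \sum_(0 <= i < #|P|) (-1) ^+ i * N i = 1 - chi A.
    have := alt_tele N #|P|.
    rewrite /N Ch0 Ch_card_big ?(card_lt zA) // mulr0 subr0.
    under eq_bigr do rewrite mulrDr.
    rewrite big_split /=.
    have chiA : chi A = \sum_(0 <= i < #|P|) (-1) ^+ i * (#|Ch A i.+1|%:R : Qq).
      by rewrite /chi big_add1 succnK.
    rewrite -chiA => /(congr1 (fun t => t - chi A)); rewrite addrC addrK => ->.
    reflexivity.
  have -> : qv ^- h z = w ^+ h z by rewrite /w exprVn.
  exact: fin_alg s0 sn sumN.
split; first exact: part1.
move=> o omax oz.
rewrite part1.
suff -> : chi A = 1 by rewrite subrr mulr0.
have -> : chi A = chi (P := P^d) A.
  by rewrite /chi; apply: eq_bigr => k _; rewrite Ch_dual.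
apply: (chi_min (B' := [pred x : P^d | (x != z) && (x != o)]) (m := o)).
- exact: oz.
- by move=> x _; exact: omax.
- by [].
Qed.
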